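(* Let $K\in\mathbb{R}^{m\times n}$, $P_0\in\mathbb{R}^{n\times n}$ symmetric, and $H\in\mathbb{R}^{m\times m}$ diagonal with $P_0+K^\top HK\succ0$. Suppose $H=H_p-H_n$ with diagonal $H_p\succ0$, $H_n\succeq0$ and $P_0-K^\top H_nK\succeq0$. Let $$V(x)=\tfrac12\big(x^\top P_0x+x^\top K^\top HKx-\mathrm{dz}(Kx)^\top H\,\mathrm{dz}(Kx)\big)=\begin{bmatrix}x\\ \mathrm{dz}(Kx)\end{bmatrix}^\top Q\begin{bmatrix}x\\ \mathrm{dz}(Kx)\end{bmatrix},\quad Q=\tfrac12\begin{bmatrix}P_0+K^\top HK&0\\0&-H\end{bmatrix}.$$ Then there exists a diagonal $T_0\succ0$ with $Q_{11}\succ0$ and $Q-\Sigma_0\succeq0$; consequently $V$ is positive definite and radially unbounded.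
   Context: Decentralized saturation $\mathrm{sat}(u)_i=\min\{\overline{u}_i,\max\{-\underline{u}_i,u_i\}\}$ with $\overline{u}_i,\underline{u}_i>0$; $\mathrm{dz}(u)=u-\mathrm{sat}(u)$. $Q_{11}$ denotes the upper-left $n\times n$ block of $Q$, and $\Sigma_0=\begin{bmatrix}0&K^\top T_0\\ T_0K&-2T_0\end{bmatrix}$. *)

(* Defs.v *)
From HB Require Import structures.
From mathcomp Require Import all_boot all_order all_algebra.
Set Implicit Arguments. Unset Strict Implicit. Unset Printing Implicit Defensive.
Import Order.TTheory GRing.Theory Num.Theory.
Local Open Scope ring_scope.

Definition qform (R : ringType) (k : nat) (A : 'M[R]_k) (x : 'cV[R]_k) : R :=
  (x^T *m A *m x) ord0 ord0.

Definition posdef (R : numDomainType) (k : nat) (A : 'M[R]_k) : Prop :=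
  A^T = A /\ forall x : 'cV[R]_k, x != 0 -> 0 < qform A x.
Definition possemidef (R : numDomainType) (k : nat) (A : 'M[R]_k) : Prop :=
  A^T = A /\ forall x : 'cV[R]_k, 0 <= qform A x.

Definition sat (R : realDomainType) (m : nat) (ub lb : 'cV[R]_m) (u : 'cV[R]_m)
  : 'cV[R]_m :=
  \col_i Num.min (ub i ord0) (Num.max (- lb i ord0) (u i ord0)).
Definition dz (R : realDomainType) (m : nat) (ub lb : 'cV[R]_m) (u : 'cV[R]_m)
  : 'cV[R]_m := u - sat ub lb u.

Definition Qmat (R : fieldType) (m n : nat) (P0 : 'M[R]_n) (K : 'M[R]_(m, n))
  (H : 'M[R]_m) : 'M[R]_(n + m) :=
  (2%:R)^-1 *: block_mx (P0 + K^T *m H *m K) 0 0 (- H).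

Definition Sigma0 (R : ringType) (m n : nat) (K : 'M[R]_(m, n)) (T0 : 'M[R]_m)
  : 'M[R]_(n + m) :=
  block_mx 0 (K^T *m T0) (T0 *m K) (- (2%:R *: T0)).

Definition Vfun (R : realFieldType) (m n : nat) (ub lb : 'cV[R]_m) (P0 : 'M[R]_n)
  (K : 'M[R]_(m, n)) (H : 'M[R]_m) (x : 'cV[R]_n) : R :=
  (2%:R)^-1 * (qform P0 x + qform (K^T *m H *m K) x
               - qform H (dz ub lb (K *m x))).

Definition normsq (R : ringType) (k : nat) (x : 'cV[R]_k) : R :=
  \sum_i x i ord0 ^+ 2.

(* Main.v *)
Require Import Defs.
From HB Require Import structures.
From mathcomp Require Import all_boot all_order all_algebra.
From mathcomp Require Import ring lra.
Import Order.TTheory GRing.Theory Num.Theory.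
Set Implicit Arguments. Unset Strict Implicit. Unset Printing Implicit Defensive.
Local Open Scope ring_scope.

Section Helpers.
Variable R : realFieldType.

Lemma qformD k (A B : 'M[R]_k) x : qform (A + B) x = qform A x + qform B x.
Proof. by rewrite /qform mulmxDr mulmxDl mxE. Qed.

Lemma qformN k (A : 'M[R]_k) x : qform (- A) x = - qform A x.
Proof. by rewrite /qform mulmxN mulNmx mxE. Qed.

Lemma qformZ k (a : R) (A : 'M[R]_k) x : qform (a *: A) x = a * qform A x.
Proof. by rewrite /qform -scalemxAr -scalemxAl mxE. Qed.

Lemma qform_conj k l (B : 'M[R]_(k, l)) (M : 'M[R]_k) z :
  qform (B^T *m M *m B) z = qform M (B *m z).
Proof. by rewrite /qform trmx_mul !mulmxA. Qed.

Lemma qform_diag k (D : 'M[R]_k) v : is_diag_mx D ->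
  qform D v = \sum_i D i i * v i ord0 ^+ 2.
Proof.
move=> /is_diag_mxP hD; rewrite /qform mxE; apply: eq_bigr => j _.
rewrite mxE (bigD1 j) //= big1 ?addr0 => [|l lj]; last first.
  by rewrite hD ?mulr0 //; apply: contraNneq lj => /val_inj ->.
by rewrite !mxE; ring.
Qed.

Lemma qform_delta k (M : 'M[R]_k) i : qform M (delta_mx i 0) = M i i.
Proof. by rewrite /qform trmx_delta -rowE -colE !mxE. Qed.

Lemma delta_neq0 k (i : 'I_k) : (delta_mx i 0 : 'cV[R]_k) != 0.
Proof.
apply/negP => /eqP /matrixP /(_ i 0); rewrite !mxE !eqxx /= => /eqP.
by rewrite oner_eq0.
Qed.

Definition bil k (G : 'M[R]_k) (y w : 'cV[R]_k) := (y^T *m G *m w) ord0 ord0.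

Lemma qform_add k (G : 'M[R]_k) y w : G^T = G ->
  qform G (y + w) = qform G y + 2 * bil G y w + qform G w.
Proof.
move=> hG.
have e : w^T *m G *m y = (y^T *m G *m w)^T.
  by rewrite !trmx_mul trmxK hG mulmxA.
rewrite /qform /bil [(y + w)^T]linearD /= !mulmxDl !mulmxDr e.
set a := y^T *m G *m y; set b := y^T *m G *m w; set c := w^T *m G *m w.
rewrite !mxE.
ring.
Qed.

Lemma bilZr k (G : 'M[R]_k) y b t : bil G y (t *: b) = t * bil G y b.
Proof. by rewrite /bil -scalemxAr mxE. Qed.

Lemma qformZv k (G : 'M[R]_k) b t : qform G (t *: b) = t ^+ 2 * qform G b.
Proof.
rewrite /qform [(t *: b)^T]linearZ /= -scalemxAl -scalemxAr -scalemxAl scalerA.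
by set X := _ *m b; rewrite mxE expr2.
Qed.

Lemma cs k (G : 'M[R]_k) y b : G^T = G -> (forall z, 0 <= qform G z) ->
  0 < qform G b -> bil G y b ^+ 2 <= qform G y * qform G b.
Proof.
move=> hG hpsd hc.
have := hpsd (y + (- (bil G y b / qform G b)) *: b).
rewrite qform_add // bilZr qformZv.
set a := qform G y; set c := qform G b; set p := bil G y b.
have cn : c != 0 by rewrite gt_eqF.
have -> : a + 2 * (- (p / c) * p) + (- (p / c)) ^+ 2 * c = (a * c - p ^+ 2) / c.
  by field.
move=> h; have := mulr_ge0 h (ltW hc); rewrite divfK // => h2.
lra.
Qed.

Lemma sat_facts (ub lb u : R) : 0 < ub -> 0 < lb ->
  let s := Num.min ub (Num.max (- lb) u) in
  [/\ 0 <= s * (u - s), (s = 0 -> u = 0) &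
   (forall p M, 0 < p -> 0 <= M -> p * (s * (u - s)) <= M ->
      u ^+ 2 <= (M / (p * ub) + M / (p * lb) + ub + lb) ^+ 2)].
Proof.
move=> hu hl s.
have gen : forall p M, 0 < p -> 0 <= M -> 0 <= M / (p * ub) /\ 0 <= M / (p * lb).
  by move=> p M hp hM; split; apply: divr_ge0 => //; apply: mulr_ge0; lra.
case: (lerP u (- lb)) => h1.
  have -> : s = - lb by rewrite /s max_l // min_r //; lra.
  split; [nra| lra |] => p M hp hM hpm.
  have [g1 g2] := gen p M hp hM.
  have hq : (M / (p * lb)) * (p * lb) = M by rewrite divfK // gt_eqF // mulr_gt0.
  have : - (u + lb) <= M / (p * lb).
    rewrite ler_pdivlMr ?mulr_gt0 //; nra.
  move=> h; nra.
have hm : Num.max (- lb) u = u by rewrite max_r // ltW.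
case: (lerP u ub) => h2.
  have -> : s = u by rewrite /s hm min_r.
  split; [nra| lra |] => p M hp hM hpm.
  have [g1 g2] := gen p M hp hM; nra.
have -> : s = ub by rewrite /s hm min_l // ltW.
split; [nra| lra |] => p M hp hM hpm.
have [g1 g2] := gen p M hp hM.
have : u - ub <= M / (p * ub).
  rewrite ler_pdivlMr ?mulr_gt0 //; nra.
move=> h; nra.
Qed.


Lemma posdef_unit k (G : 'M[R]_k) : posdef G -> G \in unitmx.
Proof.
move=> [hGT hG]; rewrite -row_free_unit -kermx_eq0.
apply/eqP/row_matrixP => i; rewrite row0.
set v := row i (kermx G).
have hv : v *m G = 0 by apply/sub_kermxP; exact: row_sub.
have : qform G v^T = 0 by rewrite /qform trmxK hv mul0mx mxE.
move=> hq; apply/eqP; apply: contraT => hv0.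
have hvT : v^T != 0 by apply: contra hv0 => /eqP h; rewrite -(trmxK v) h linear0.
by have := hG _ hvT; rewrite hq ltxx.
Qed.

Lemma normsq_bound k (G : 'M[R]_k) x : posdef G ->
  normsq x <= qform G x * \sum_i (invmx G) i i /\ 0 <= \sum_i (invmx G) i i.
Proof.
move=> hG; have hU := posdef_unit hG; case: hG => hGT hG.
have key : forall i, bil G x (invmx G *m delta_mx i 0) = x i 0 /\
    qform G (invmx G *m delta_mx i 0) = invmx G i i /\ 0 < invmx G i i.
  move=> i; set b := invmx G *m delta_mx i 0.
  have hGb : G *m b = delta_mx i 0 by rewrite mulmxA mulmxV ?mul1mx.
  have hb : b != 0.
    by apply: contra (delta_neq0 i) => /eqP hb; rewrite -hGb hb mulmx0.
  have e2 : qform G b = invmx G i i.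
    rewrite /qform -mulmxA hGb /b trmx_mul trmx_inv hGT trmx_delta.
    by rewrite -rowE -colE !mxE.
  split; last by split=> //; rewrite -e2; exact: hG.
  by rewrite /bil -mulmxA hGb -colE !mxE.
split; last by apply: sumr_ge0 => i _; have [_ [_ h]] := key i; exact: ltW.
rewrite /normsq mulr_sumr; apply: ler_sum => i _.
have [e1 [e2 e3]] := key i; rewrite -e1 -e2.
apply: cs => //; last by rewrite e2.
move=> z; case: (eqVneq z 0) => [->|hz]; last exact/ltW/hG.
by rewrite /qform mulmx0 mxE.
Qed.

Lemma psd_conj k l (B : 'M[R]_(k, l)) (M : 'M[R]_k) :
  possemidef M -> possemidef (B^T *m M *m B).
Proof.
move=> [hT h]; split; first by rewrite !trmx_mul trmxK hT mulmxA.
by move=> z; rewrite qform_conj.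
Qed.

Lemma psd_add k (A B : 'M[R]_k) : possemidef A -> possemidef B -> possemidef (A + B).
Proof.
move=> [hA1 hA2] [hB1 hB2]; split; first by rewrite linearD /= hA1 hB1.
by move=> z; rewrite qformD addr_ge0.
Qed.

Lemma psd_scale k (a : R) (A : 'M[R]_k) : 0 <= a -> possemidef A -> possemidef (a *: A).
Proof.
move=> ha [h1 h2]; split; first by rewrite linearZ /= h1.
by move=> z; rewrite qformZ mulr_ge0.
Qed.

Lemma pd_scale k (a : R) (A : 'M[R]_k) : 0 < a -> posdef A -> posdef (a *: A).
Proof.
move=> ha [h1 h2]; split; first by rewrite linearZ /= h1.
by move=> z hz; rewrite qformZ mulr_gt0 // h2.
Qed.

Lemma sum_pos k (f : 'I_k -> R) i : (forall j, 0 <= f j) -> f i <= \sum_j f j.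
Proof.
move=> h; rewrite (bigD1 i) //= lerDl; apply: sumr_ge0 => j _; exact: h.
Qed.

Lemma cV_neq0 k (v : 'cV[R]_k) : v != 0 -> exists i, v i ord0 != 0.
Proof.
move=> hv; apply/existsP; apply: contraNT hv; rewrite negb_exists => /forallP h.
apply/eqP/matrixP => i j; rewrite (ord1 j) mxE; exact/eqP/negbNE/h.
Qed.

Lemma qform0 k (G : 'M[R]_k) : qform G 0 = 0.
Proof. by rewrite /qform mulmx0 mxE. Qed.
End Helpers.
Unset Implicit Arguments.

Theorem lemma3 (R : realFieldType) (m n : nat) (K : 'M[R]_(m, n))
  (P0 : 'M[R]_n) (H Hp Hn : 'M[R]_m) (ub lb : 'cV[R]_m) :
  (forall i, 0 < ub i ord0) -> (forall i, 0 < lb i ord0) ->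
  P0^T = P0 -> is_diag_mx H -> posdef (P0 + K^T *m H *m K) ->
  H = Hp - Hn -> is_diag_mx Hp -> is_diag_mx Hn ->
  posdef Hp -> possemidef Hn -> possemidef (P0 - K^T *m Hn *m K) ->
  (exists T0 : 'M[R]_m,
      is_diag_mx T0 /\ posdef T0 /\
      posdef (ulsubmx (Qmat P0 K H)) /\
      possemidef (Qmat P0 K H - Sigma0 K T0)) /\
  (Vfun ub lb P0 K H 0 = 0 /\
   forall x : 'cV[R]_n, x != 0 -> 0 < Vfun ub lb P0 K H x) /\
  (forall M : R, exists r : R, forall x : 'cV[R]_n,
      r <= normsq x -> M <= Vfun ub lb P0 K H x).
Proof.
move=> hub hlb hP0 hHd hP hH hHpd hHnd hHp hHn hA.
subst H.
set A := P0 - K^T *m Hn *m K in hA *.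
have HpT : Hp^T = Hp by case: hHp.
have HnT : Hn^T = Hn by case: hHn.
have hp : forall i, 0 < Hp i i.
  by move=> i; rewrite -qform_delta; case: hHp => _ h; apply: h; exact: delta_neq0.
have hn : forall i, 0 <= Hn i i.
  by move=> i; rewrite -qform_delta; case: hHn => _ h; apply: h.
have ePA : P0 + K^T *m (Hp - Hn) *m K = A + K^T *m Hp *m K.
  by rewrite /A mulmxBr mulmxBl addrA addrAC.
have h2 : 0 < (2%:R : R)^-1 by rewrite invr_gt0 ltr0n.
split.
  exists (2%:R^-1 *: Hp); split.
    by apply/is_diag_mxP => i j ij; rewrite mxE (is_diag_mxP hHpd) ?mulr0.
  split; first exact: pd_scale.
  split.
    by rewrite /Qmat scale_block_mx block_mxKul; apply: pd_scale.
  have -> : Qmat P0 K (Hp - Hn) - Sigma0 K (2%:R^-1 *: Hp) = 2%:R^-1 *: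
     ((row_mx 1%:M 0 : 'M_(n, n + m))^T *m A *m row_mx 1%:M 0
      + (row_mx K (-1%:M))^T *m Hp *m row_mx K (-1%:M)
      + (row_mx 0 1%:M : 'M_(m, n + m))^T *m Hn *m row_mx 0 1%:M).
    rewrite /Qmat /Sigma0 !tr_row_mx -!mulmxA !mul_mx_row !mul_col_mx -!block_mxEh.
    rewrite (scale_block_mx (2%:R^-1 : R)) opp_block_mx !add_block_mx scale_block_mx.
    rewrite ![(- 1%:M)^T]linearN /= trmx1 !trmx0 ?mulmx1 ?mulmx0 ?mul1mx ?mul0mx ?mulmxN ?mulNmx ?mulmx1 ?mul1mx.
    rewrite ?mulmxBr ?mulmxBl.
    have n2 : (2%:R : R) != 0 by rewrite pnatr_eq0.
    congr block_mx.
      by rewrite subr0 addr0 -mulmxBl !mulmxA ePA.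
     by rewrite scaler0 sub0r add0r addr0 scalerN -scalemxAr.
    by rewrite trmx1 mul1mx scaler0 sub0r add0r addr0 scalerN -scalemxAl.
    rewrite trmx1 !mul1mx sub0r opprK scalerA mulfV // scale1r.
    by apply/matrixP => i j; rewrite !mxE; field.
  apply: psd_scale; first exact: ltW.
  have hHp' : possemidef Hp.
    case: hHp => h1 h; split=> // z; case: (eqVneq z 0) => [->|hz]; last exact/ltW/h.
    by rewrite /qform mulmx0 mxE.
  by apply: psd_add; [apply: psd_add|]; apply: psd_conj.
pose sf i (v : R) := Num.min (ub i ord0) (Num.max (- lb i ord0) v).
pose T i (v : R) := Hp i i * (sf i v ^+ 2 + 2 * (sf i v * (v - sf i v)))
   + Hn i i * (v - sf i v) ^+ 2.
have Vid : forall x, Vfun ub lb P0 K (Hp - Hn) x =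
    2%:R^-1 * (qform A x + \sum_i T i ((K *m x) i ord0)).
  move=> x; rewrite /Vfun.
  have eP0 : P0 = A + K^T *m Hn *m K by rewrite /A subrK.
  rewrite {1}eP0 qformD !qform_conj (qform_diag _ hHnd) !(qform_diag _ hHd).
  set u := K *m x; congr (_ * _); rewrite -!addrA; congr (_ + _).
  rewrite -sumrB -!big_split; apply: eq_bigr => i _ /=.
  rewrite /T /sf !mxE; ring.
have Tfacts : forall i v, 0 <= T i v /\ Hp i i * sf i v ^+ 2 <= T i v /\
    2 * (Hp i i * (sf i v * (v - sf i v))) <= T i v /\
    0 <= sf i v * (v - sf i v) /\ (sf i v = 0 -> v = 0) /\
   (forall M, 0 <= M -> Hp i i * (sf i v * (v - sf i v)) <= M ->
      v ^+ 2 <= (M / (Hp i i * ub i ord0) + M / (Hp i i * lb i ord0)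
                 + ub i ord0 + lb i ord0) ^+ 2).
  move=> i v; have [f1 f2 f3] := sat_facts v (hub i) (hlb i).
  have hpi := hp i; have hni := hn i.
  have e1 : 0 <= Hn i i * (v - sf i v) ^+ 2 by rewrite mulr_ge0 ?sqr_ge0.
  have e2 : 0 <= Hp i i * sf i v ^+ 2 by rewrite mulr_ge0 ?sqr_ge0 ?ltW.
  have e3 : 0 <= Hp i i * (sf i v * (v - sf i v)) by exact: mulr_ge0 (ltW hpi) f1.
  rewrite /T; move: f1 f2 f3 e1 e2 e3; rewrite -/(sf i v); set s := sf i v.
  move=> f1 f2 f3 e1 e2 e3.
  split; first lra. split; first lra. split; first lra. split; first exact: f1.
  split; first exact: f2.
  by move=> M hM; apply: f3.
have qA0 : forall x, 0 <= qform A x by case: hA.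
have qAK : forall x, K *m x = 0 -> x != 0 -> 0 < qform A x.
  move=> x hx x0; case: hP => _ h; have := h x x0.
  by rewrite ePA qformD qform_conj hx qform0 addr0.
split.
  split.
    rewrite Vid qform0 mulmx0 add0r big1 ?mulr0 // => i _.
    rewrite mxE;     rewrite /T /sf max_r ?oppr_le0 ?ltW // min_r ?ltW //.
    ring.
  move=> x x0; rewrite Vid; apply: mulr_gt0 => //.
  case: (eqVneq (K *m x) 0) => hK.
    rewrite hK big1 ?addr0; first exact: qAK.
    move=> i _; rewrite mxE /T /sf max_r ?oppr_le0 ?ltW // min_r ?ltW //.
    ring.
  have [i hi] := cV_neq0 hK.
  have [t1 [t2 [_ [_ [t5 _]]]]] := Tfacts i ((K *m x) i ord0).
  have hs : sf i ((K *m x) i ord0) != 0 by apply: contra hi => /eqP /t5 ->.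
  have : 0 < Hp i i * sf i ((K *m x) i ord0) ^+ 2.
    by rewrite mulr_gt0 // lt0r sqr_ge0 sqrf_eq0 hs.
  have := sum_pos i (fun j => (Tfacts j ((K *m x) j ord0)).1).
  have := qA0 x; lra.
pose G := A + K^T *m 1%:M *m K.
have psd1 : possemidef (1%:M : 'M[R]_m).
  split; first exact: trmx1.
  by move=> z; rewrite qform_diag ?scalar_mx_is_diag //; apply: sumr_ge0 => i _; rewrite mxE eqxx mul1r sqr_ge0.
have qG : forall x, qform G x = qform A x + \sum_i (K *m x) i ord0 ^+ 2.
  move=> x; rewrite /G qformD qform_conj [qform 1%:M _]qform_diag ?scalar_mx_is_diag //.
  by congr (_ + _); apply: eq_bigr => i _; rewrite mxE eqxx mul1r.
have hG : posdef G.
  split; first by case: (psd_add hA (psd_conj K psd1)).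
  move=> x x0; rewrite qG; case: (eqVneq (K *m x) 0) => hK.
    by rewrite hK big1 ?addr0 ?qAK // => i _; rewrite mxE expr0n.
  have [i hi] := cV_neq0 hK.
  have := sum_pos i (fun j => sqr_ge0 ((K *m x) j ord0)).
  have : 0 < (K *m x) i ord0 ^+ 2 by rewrite lt0r sqr_ge0 sqrf_eq0 hi.
  have := qA0 x; lra.
move=> M; set M0 := `|M|.
have hM0 : 0 <= M0 by exact: normr_ge0.
have hMM : M <= M0 by exact: ler_norm.
pose C i := M0 / (Hp i i * ub i ord0) + M0 / (Hp i i * lb i ord0)
                 + ub i ord0 + lb i ord0.
pose Tr := \sum_i (invmx G) i i.
exists ((2 * M0 + \sum_i C i ^+ 2 + 1) * Tr + 1) => x hr.
rewrite leNgt; apply/negP => hV.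
have [hb hT] := normsq_bound x hG.
have hsum : 0 <= \sum_i T i ((K *m x) i ord0) by apply: sumr_ge0 => j _; exact: (Tfacts j _).1.
have hVx := Vid x.
have hqA := qA0 x.
have hu : forall i, (K *m x) i ord0 ^+ 2 <= C i ^+ 2.
  move=> i; have [t1 [t2 [t3 [t4 [t5 t6]]]]] := Tfacts i ((K *m x) i ord0).
  apply: t6 => //.
  have := sum_pos i (fun j => (Tfacts j ((K *m x) j ord0)).1).
  lra.
have hq : qform G x <= 2 * M0 + \sum_i C i ^+ 2.
  rewrite qG; apply: lerD; first lra.
  by apply: ler_sum => i _; exact: hu.
have fin : forall a b c t : R, a <= b * t -> b * t <= c * t ->
    (c + 1) * t + 1 <= a -> 0 <= t -> False.
  by move=> a b c t; nra.
apply: (fin _ _ _ _ hb (ler_wpM2r hT hq) hr hT).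
Qed.
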